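(* Let $R$ be a local Artinian ring which is not a division ring, and let $C=C(R)$ be its center. (1) If $R$ is centrally essential, then $R/J(R)$ is commutative and $C\cap M\neq 0$ for every minimal right ideal $M$ of $R$. (2) If $R/J(R)$ is commutative, $\mathrm{Soc}(R_C)=\mathrm{Soc}(R_R)$, and $C\cap M\neq 0$ for every minimal right ideal $M$ of $R$, then $R$ is centrally essential.
   Context: All rings are associative with non-zero identity. A ring $R$ is centrally essential if for every non-zero $a\in R$ there exist non-zero elements $x,y\in C(R)$ with $ax=y$. A ring is local if $R/J(R)$ is a division ring, where $J(R)$ is the Jacobson radical. $\mathrm{Soc}(R_R)$ is the sum of all minimal right ideals of $R$, and $\mathrm{Soc}(R_C)$ is the sum of all simple $C$-submodules of $R$ regarded as a $C$-module. *)

(* Defs.v *)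
From mathcomp Require Import all_boot all_algebra.
Set Implicit Arguments. Unset Strict Implicit. Unset Printing Implicit Defensive.
Import GRing.Theory.
Local Open Scope ring_scope.

Section RingDefs.
Variable R : nzRingType.

Definition central (c : R) : Prop := forall r : R, c * r = r * c.

Definition is_unit (x : R) : Prop := exists y : R, x * y = 1 /\ y * x = 1.

Definition division_ring : Prop := forall x : R, x <> 0 -> is_unit x.

Definition add_subgroup (I : R -> Prop) : Prop :=
  I 0 /\ (forall x y, I x -> I y -> I (x - y)).

Definition right_ideal (I : R -> Prop) : Prop :=
  add_subgroup I /\ (forall x r, I x -> I (x * r)).

Definition subset (I K : R -> Prop) : Prop := forall x, I x -> K x.
Definition same_set (I K : R -> Prop) : Prop := forall x, I x <-> K x.
Definition zero_set (I : R -> Prop) : Prop := forall x, I x -> x = 0.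

Definition maximal_right_ideal (M : R -> Prop) : Prop :=
  right_ideal M /\ ~ M 1 /\
  forall K, right_ideal K -> subset M K -> same_set K M \/ K 1.

Definition jacobson (x : R) : Prop :=
  forall M, maximal_right_ideal M -> M x.

(* R/J(R) is a division ring, written out on representatives:
   the quotient is non-zero and every non-zero class is invertible. *)
Definition local_ring : Prop :=
  ~ jacobson 1 /\
  forall x : R, ~ jacobson x ->
    exists y : R, jacobson (x * y - 1) /\ jacobson (y * x - 1).

Definition comm_mod_jacobson : Prop :=
  forall x y : R, jacobson (x * y - y * x).

Definition right_artinian : Prop :=
  forall I : nat -> R -> Prop,
    (forall n, right_ideal (I n)) ->
    (forall n, subset (I n.+1) (I n)) ->
    exists N, forall n, (N <= n)%N -> same_set (I n) (I N).

Definition minimal_right_ideal (M : R -> Prop) : Prop :=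
  right_ideal M /\ ~ zero_set M /\
  forall K, right_ideal K -> subset K M -> zero_set K \/ same_set K M.

Definition C_submodule (N : R -> Prop) : Prop :=
  add_subgroup N /\ (forall x c, central c -> N x -> N (x * c)).

Definition simple_C_submodule (N : R -> Prop) : Prop :=
  C_submodule N /\ ~ zero_set N /\
  forall K, C_submodule K -> subset K N -> zero_set K \/ same_set K N.

Definition sum_of_family (F : (R -> Prop) -> Prop) (x : R) : Prop :=
  exists s : seq R, (forall a, a \in s -> exists N, F N /\ N a) /\
                    x = \sum_(a <- s) a.

Definition soc_RR : R -> Prop := sum_of_family minimal_right_ideal.
Definition soc_RC : R -> Prop := sum_of_family simple_C_submodule.

Definition centrally_essential : Prop :=
  forall a : R, a <> 0 ->
    exists x y : R, central x /\ central y /\ x <> 0 /\ y <> 0 /\ a * x = y.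

End RingDefs.
Arguments central {R}.
Arguments minimal_right_ideal {R}.
Arguments same_set {R}.
Arguments soc_RC R : clear implicits.
Arguments soc_RR R : clear implicits.

(* Main.v *)
Require Import Defs.
From mathcomp Require Import all_boot all_algebra.
From mathcomp Require classical_sets boolp.
From Stdlib Require Import Classical ClassicalEpsilon.
Set Implicit Arguments. Unset Strict Implicit. Unset Printing Implicit Defensive.
Import GRing.Theory.
Local Open Scope ring_scope.

Section S.
Variable R : nzRingType.
Implicit Types (x y z j r c d u v w s a : R).

Lemma J0 : jacobson (0 : R).
Proof. by move=> M [[[H0 _] _] _]. Qed.

Lemma JB x y : jacobson x -> jacobson y -> jacobson (x - y).
Proof. by move=> Hx Hy M HM; case: (HM) => [[[_ HB] _] _]; apply: HB; [apply: Hx|apply: Hy]. Qed.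

Lemma JN x : jacobson x -> jacobson (- x).
Proof. by move=> Hx; rewrite -sub0r; apply: JB => //; apply: J0. Qed.

Lemma JD x y : jacobson x -> jacobson y -> jacobson (x + y).
Proof. by move=> Hx Hy; rewrite -(opprK y); apply: JB => //; apply: JN. Qed.

Lemma JM x r : jacobson x -> jacobson (x * r).
Proof. by move=> Hx M HM; case: (HM) => [[_ HM'] _]; apply: HM'; apply: Hx. Qed.

Lemma rinv1J j : jacobson j -> exists w, (1 + j) * w = 1.
Proof.
move=> Jj; apply: NNPP => Hn.
pose P : (R -> Prop) -> Prop := fun X => X = (fun _ => False) \/
   (right_ideal X /\ ~ X 1 /\ X (1 + j)).
have [A [PA Amax]] : exists A, P A /\ forall B, classical_sets.proper A B -> ~ P B.
  apply: classical_sets.Zorn_bigcup => Fm FP Ftot.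
  set U := classical_sets.bigcup _ _.
  have HU : forall a, U a <-> exists2 X, Fm X & X a by [].
  case: (classic (exists a, U a)) => [[a0 Ua0]|Hno]; last first.
    left; apply: boolp.funext => a; apply: boolp.propext; split => // Ua.
    by apply: Hno; exists a.
  have memP : forall X a, Fm X -> X a -> right_ideal X /\ ~ X 1 /\ X (1 + j).
    move=> X a FX Xa; case: (FP X FX) => // EX; by rewrite EX in Xa.
  have [X0 FX0 X0a] := (proj1 (HU a0)) Ua0.
  have [[[X00 _] _] [_ X01]] := memP _ _ FX0 X0a.
  right; split; last split.
  - split; first split.
    + by apply/HU; exists X0.
    + move=> x y /HU [X FX Xx] /HU [Y FY Yy].
      case: (Ftot X Y FX FY) => sub.
      * have [[[_ HB] _] _] := memP _ _ FY Yy.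
        by apply/HU; exists Y => //; apply: HB => //; apply: sub.
      * have [[[_ HB] _] _] := memP _ _ FX Xx.
        by apply/HU; exists X => //; apply: HB => //; apply: sub.
    + move=> x r /HU [X FX Xx]; have [[_ HM] _] := memP _ _ FX Xx.
      by apply/HU; exists X => //; apply: HM.
  - move=> /HU [X FX X1]; have [_ [HX _]] := memP _ _ FX X1; exact: HX.
  - by apply/HU; exists X0.
pose M0 := fun z : R => exists r, z = (1 + j) * r.
have PM0 : P M0.
  right; split; last split.
  - split; first split.
    + by exists 0; rewrite mulr0.
    + by move=> x y [r1 ->] [r2 ->]; exists (r1 - r2); rewrite mulrBr.
    + by move=> x r [r1 ->]; exists (r1 * r); rewrite mulrA.
  - by move=> [r Hr]; apply: Hn; exists r.
  - by exists 1; rewrite mulr1.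
case: PA => [EA|[AR [A1 Aj]]].
  apply: (Amax M0) => //; split; first by rewrite EA.
  by move=> H; have := H (1 + j) ltac:(by exists 1; rewrite mulr1); rewrite EA.
have maxA : maximal_right_ideal A.
  split => //; split => // K KR sub.
  case: (classic (K 1)) => [|K1]; [by right|left].
  move=> x; split; last by apply: sub.
  move=> Kx; apply: NNPP => nAx; apply: (Amax K); first by split => // H; apply: nAx; apply: H.
  by right; split => //; split => //; apply: sub.
apply: A1; have := Jj A maxA; case: AR => [[_ HB] _] Aj'.
by have := HB _ _ Aj Aj'; rewrite addrK.
Qed.


Lemma unit1J j : jacobson j -> is_unit (1 + j).
Proof.
move=> Jj; have [w Hw] := rinv1J Jj.
have Jjw : jacobson (- (j * w)) by apply: JN; apply: JM.
have Ew : w = 1 + - (j * w).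
  have H : w + j * w = 1 by rewrite -Hw mulrDl mul1r.
  by rewrite -[X in X + _]H addrK.
have [w' Hw'] := rinv1J Jjw; rewrite -Ew in Hw'.
have E : 1 + j = w'.
  by transitivity ((1 + j) * (w * w')); [rewrite Hw' mulr1|rewrite mulrA Hw mul1r].
by exists w; split => //; rewrite E -Hw' -E.
Qed.

Lemma unitJ : local_ring R -> forall x, ~ jacobson x -> is_unit x.
Proof.
move=> [_ Hl] x nJx; have [y [J1 J2]] := Hl x nJx.
have := unit1J J1; rewrite addrC subrK => -[v1 [H1 H1']].
have := unit1J J2; rewrite addrC subrK => -[v2 [H2 H2']].
have r1 : x * (y * v1) = 1 by rewrite mulrA.
have l1 : (v2 * y) * x = 1 by rewrite -mulrA.
have E : v2 * y = y * v1 by rewrite -[v2 * y]mulr1 -r1 mulrA l1 mul1r.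
by exists (y * v1); split => //; rewrite -E.
Qed.

Lemma unit_notJ : local_ring R -> forall x, is_unit x -> ~ jacobson x.
Proof. move=> [H1 _] x [y [H _]] Jx; apply: H1; have := JM y Jx; by rewrite H. Qed.

Lemma J_mull : local_ring R -> forall x u, jacobson u -> jacobson (x * u).
Proof.
move=> Hl x u Ju; apply: NNPP => nJ.
have [v [_ H2]] := unitJ Hl nJ; rewrite mulrA in H2.
case: (classic (jacobson (v * x))) => Jvx.
  by case: Hl => H1 _; apply: H1; rewrite -H2; apply: JM.
have [z [_ Hz]] := unitJ Hl Jvx.
have Eu : u = z by rewrite -[u]mul1r -Hz -mulrA H2 mulr1.
apply: (unit_notJ Hl (x := u)) => //; exists (v * x); split => //.
by rewrite Eu; rewrite Eu in H2.
Qed.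

Lemma central_mul c d : central c -> central d -> central (c * d).
Proof. by move=> Hc Hd r; rewrite -mulrA Hd mulrA Hc mulrA. Qed.

Lemma central0 : @central R 0.
Proof. by move=> r; rewrite mul0r mulr0. Qed.

Lemma central1 : @central R 1.
Proof. by move=> r; rewrite mul1r mulr1. Qed.

Lemma centralB c d : central c -> central d -> central (c - d).
Proof. by move=> Hc Hd r; rewrite mulrBl mulrBr Hc Hd. Qed.

Lemma inv_central c (c' : R) : central c -> c * c' = 1 -> c' * c = 1 -> central c'.
Proof.
move=> Hc H1 H2 r.
transitivity (c' * (r * c) * c'); first by rewrite mulrA -(mulrA _ c) H1 mulr1.
by rewrite -Hc mulrA H2 mul1r.
Qed.

Lemma min_elt (F : (R -> Prop) -> Prop) : right_artinian R ->
  (forall I, F I -> right_ideal I) -> (exists I, F I) ->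
  exists I, F I /\ forall K, F K -> Defs.subset K I -> Defs.subset I K.
Proof.
move=> art Fr [I0 FI0]; apply: NNPP => Hn.
have step : forall I : {I | F I}, {K : {I | F I} |
    Defs.subset (sval K) (sval I) /\ ~ Defs.subset (sval I) (sval K)}.
  move=> [I FI]; apply: constructive_indefinite_description.
  have H0 := not_ex_all_not _ _ Hn I.
  apply: NNPP => H'; apply: H0; split => // K FK sub; apply: NNPP => ns.
  by apply: H'; exists (exist _ K FK); split.
pose f := fun I => sval (step I).
pose sq n := iter n f (exist _ I0 FI0).
have [N HN] := art (fun n => sval (sq n)) (fun n => Fr _ (svalP (sq n)))
  (fun n => proj1 (svalP (step (sq n)))).
have := proj2 (svalP (step (sq N))); apply => x Hx.
by apply/(HN N.+1 (leqnSn N)).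
Qed.

Lemma exists_minimal : right_artinian R -> exists M : R -> Prop, minimal_right_ideal M.
Proof.
move=> art.
have FT : right_ideal (fun _ : R => True) /\ ~ zero_set (fun _ : R => True).
  split; first by split.
  by move=> H; have /eqP := H 1 I; rewrite oner_eq0.
have [M [[MR nM] Mmin]] := @min_elt (fun I => right_ideal I /\ ~ zero_set I) art
  (fun I H => proj1 H) (ex_intro _ _ FT).
exists M; split => //; split => // K KR sub.
case: (classic (zero_set K)) => HK; [by left|right].
by move=> x; split; [apply: sub | apply: (Mmin K) ].
Qed.

Lemma minJ0 : local_ring R -> forall M m, minimal_right_ideal M -> M m ->
  forall j, jacobson j -> m * j = 0.
Proof.
move=> Hl M m [[[M0 MB] MM] [_ Mmin]] Mm j Jj.
pose K := fun z => exists j, jacobson j /\ z = m * j.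
have KR : right_ideal K.
  split; first split.
  - by exists 0; split; [apply: J0 | rewrite mulr0].
  - by move=> x y [j1 [J1 ->]] [j2 [J2 ->]]; exists (j1 - j2); split; [apply: JB|rewrite mulrBr].
  - by move=> x r [j1 [J1 ->]]; exists (j1 * r); split; [apply: JM|rewrite mulrA].
have sub : Defs.subset K M by move=> x [j1 [_ ->]]; apply: MM.
case: (Mmin K KR sub) => HK.
  by apply: HK; exists j.
have [j1 [J1 Em]] := (proj2 (HK m)) Mm.
have [v [Hv _]] := unit1J (JN J1).
have m0 : m = 0.
  by rewrite -[m]mulr1 -Hv mulrA mulrDr mulr1 mulrN -Em subrr mul0r.
by rewrite m0 mul0r.
Qed.

Lemma soc_J0 : local_ring R -> forall s, soc_RR R s ->
  forall j, jacobson j -> s * j = 0.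
Proof.
move=> Hl s [l [Hlm ->]] j Jj; rewrite mulr_suml big1_seq // => a /andP [_ al].
by have [M [HM Ma]] := Hlm a al; apply: (minJ0 Hl HM Ma).
Qed.

Lemma cw_central : comm_mod_jacobson R -> forall c, central c ->
  (forall j, jacobson j -> c * j = 0) -> forall w, central (c * w).
Proof.
move=> Hc c Cc cJ w r.
have := cJ _ (Hc w r); rewrite mulrBr => /eqP; rewrite subr_eq0 => /eqP E.
by rewrite -mulrA E (mulrA c) (Cc r) -mulrA.
Qed.

Lemma sR_minimal : local_ring R -> forall s, s <> 0 ->
  (forall j, jacobson j -> s * j = 0) ->
  minimal_right_ideal (fun z => exists r, z = s * r).
Proof.
move=> Hl s s0 sJ; split; first split; first split.
- by exists 0; rewrite mulr0.
- by move=> x y [r1 ->] [r2 ->]; exists (r1 - r2); rewrite mulrBr.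
- by move=> x r [r1 ->]; exists (r1 * r); rewrite mulrA.
split; first by move=> H; apply: s0; rewrite -[s]mulr1; apply: H; exists 1.
move=> K [[K0 KB] KM] sub.
case: (classic (zero_set K)) => HK; [by left|right].
have [z nz] := not_all_ex_not _ _ HK.
have [Kz zn0] := imply_to_and _ _ nz.
have [r Ez] := sub z Kz.
have nJr : ~ jacobson r by move=> Jr; apply: zn0; rewrite Ez sJ.
have [r' [Hr _]] := unitJ Hl nJr.
have Ks : K s by have := KM _ r' Kz; rewrite Ez -mulrA Hr mulr1.
move=> x; split; first by apply: sub.
by move=> [r1 ->]; apply: KM.
Qed.

End S.

Lemma nonzero_elt (R : nzRingType) (M : R -> Prop) : ~ zero_set M -> exists m, M m /\ m <> 0.
Proof.
move=> H; have [z nz] := not_all_ex_not _ _ H.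
by have [Kz zn0] := imply_to_and _ _ nz; exists z.
Qed.

Theorem proposition3p4 (R : nzRingType) :
  local_ring R -> right_artinian R -> ~ division_ring R ->
  (centrally_essential R ->
     comm_mod_jacobson R /\
     (forall M : R -> Prop, minimal_right_ideal M ->
        exists c : R, central c /\ M c /\ c <> 0))
  /\
  (comm_mod_jacobson R ->
   same_set (soc_RC R) (soc_RR R) ->
   (forall M : R -> Prop, minimal_right_ideal M ->
        exists c : R, central c /\ M c /\ c <> 0) ->
   centrally_essential R).
Proof.
move=> Hl art nD; split.
  move=> CE.
  have [M HM] := exists_minimal art.
  have [m [Mm m0]] := nonzero_elt (proj1 (proj2 HM)).
  have mJ := minJ0 Hl HM Mm.
  have [x [y [Cx [Cy [x0 [y0 Exy]]]]]] := CE m m0.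
  have cJ : forall j, jacobson j -> y * j = 0.
    by move=> j Jj; rewrite -Exy -mulrA (Cx j) mulrA mJ // mul0r.
  have cw : forall w, central (y * w).
    move=> w; case: (classic (y * w = 0)) => [->|ne]; first exact: central0.
    have [u [v [Cu [Cv [u0 [v0 Euv]]]]]] := CE _ ne.
    have nJu : ~ jacobson u.
      by move=> Ju; apply: v0; rewrite -Euv -mulrA -(Cu w) cJ //; apply: JM.
    have [u' [H1 H2]] := unitJ Hl nJu.
    have Cu' := inv_central Cu H1 H2.
    have -> : y * w = v * u' by rewrite -Euv -mulrA H1 mulr1.
    exact: central_mul.
  split.
    move=> a b; apply: NNPP => nJ; have [z [Hz _]] := unitJ Hl nJ.
    apply: y0.
    have H : y * (a * b - b * a) = 0.
      by rewrite mulrBr !mulrA (cw a b) mulrA -(Cy b) subrr.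
    by rewrite -[y]mulr1 -Hz mulrA H mul0r.
  move=> N HN; have [n [Nn n0]] := nonzero_elt (proj1 (proj2 HN)).
  have [x1 [y1 [Cx1 [Cy1 [x10 [y10 Exy1]]]]]] := CE n n0.
  exists y1; split => //; split => //; rewrite -Exy1.
  by case: HN => [[_ HM'] _]; apply: HM'.
move=> Hc Hsoc Hmin a a0.
pose F := fun I => exists x, central x /\ a * x <> 0 /\ I = (fun z => exists r, z = a * x * r).
have FR : forall I, F I -> right_ideal I.
  move=> I [x [_ [_ ->]]]; split; first split.
  - by exists 0; rewrite mulr0.
  - by move=> y z [r1 ->] [r2 ->]; exists (r1 - r2); rewrite mulrBr.
  - by move=> y r [r1 ->]; exists (r1 * r); rewrite mulrA.
have F1 : F (fun z => exists r, z = a * 1 * r) by exists 1; split; [exact: central1|rewrite mulr1].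
have [I [[x [Cx [ax0 EI]]] Imin]] := min_elt art FR (ex_intro _ _ F1).
set s := a * x in ax0 EI *.
have sd : forall d, central d -> jacobson d -> s * d = 0.
  move=> d Cd Jd; apply: NNPP => ne.
  have FK : F (fun z => exists r, z = a * (x * d) * r).
    by exists (x * d); split; [apply: central_mul|split; [rewrite mulrA|]].
  have sub : Defs.subset (fun z => exists r, z = a * (x * d) * r) I.
    by move=> z [r ->]; rewrite EI; exists (d * r); rewrite !mulrA.
  have Is : I s by rewrite EI; exists 1; rewrite mulr1.
  have [r Er] := Imin _ FK sub s Is.
  have [v [Hv _]] := unit1J (JN (JM r Jd)).
  apply: ax0; rewrite -[s]mulr1 -Hv mulrA mulrDr mulr1 mulrN.
  have E2 : s * (d * r) = s by rewrite [RHS]Er /s -!mulrA.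
  by rewrite E2 subrr mul0r.
pose N := fun z => exists c, central c /\ z = s * c.
have NS : simple_C_submodule N.
  split; first split; first split.
  - by exists 0; split; [exact: central0|rewrite mulr0].
  - by move=> y z [c1 [C1 ->]] [c2 [C2 ->]]; exists (c1 - c2); split; [apply: centralB|rewrite mulrBr].
  - by move=> y c Cc [c1 [C1 ->]]; exists (c1 * c); split; [apply: central_mul|rewrite mulrA].
  split.
    move=> H; apply: ax0; apply: H; exists 1; split; [exact: central1|by rewrite mulr1].
  move=> K [[K0 KB] KM] sub.
  case: (classic (zero_set K)) => HK; [by left|right].
  have [z [Kz z0]] := nonzero_elt HK.
  have [c [Cc Ez]] := sub z Kz.
  have nJc : ~ jacobson c by move=> Jc; apply: z0; rewrite Ez sd.
  have [c' [H1 H2]] := unitJ Hl nJc.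
  have Cc' := inv_central Cc H1 H2.
  have Ks : K s by have := KM z c' Cc' Kz; rewrite Ez -mulrA H1 mulr1.
  move=> w; split; first by apply: sub.
  by move=> [c1 [C1 ->]]; apply: KM.
have socC : soc_RC R s.
  exists [:: s]; split; last by rewrite big_cons big_nil addr0.
  by move=> b; rewrite inE => /eqP ->; exists N; split => //; exists 1; split; [exact: central1|rewrite mulr1].
have sJ := soc_J0 Hl ((proj1 (Hsoc s)) socC).
have [c [Cc [[r Ecr] c0]]] := Hmin _ (sR_minimal Hl ax0 sJ).
have nJr : ~ jacobson r by move=> Jr; apply: c0; rewrite Ecr sJ.
have [r' [H1 H2]] := unitJ Hl nJr.
have cJ : forall j, jacobson j -> c * j = 0.
  by move=> j Jj; rewrite Ecr -mulrA sJ //; apply: J_mull.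
have Es : s = c * r' by rewrite Ecr -mulrA H1 mulr1.
exists x, s; split => //; split; first by rewrite Es; apply: cw_central.
split; first by move=> x0; apply: ax0; rewrite /s x0 mulr0.
by split.
Qed.
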